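(* Let $B$ be a finite Blaschke product of degree $n\ge1$ and $\lambda\in\mathbb T$. Then the equation $zB(z)=\lambda$ has exactly $n+1$ distinct solutions $z_0,\dots,z_n$, all lying on $\mathbb T$, and \[ \sum_{j=0}^n\frac{1}{|B'(z_j)|+1}=1 . \]
   Context: A finite Blaschke product of degree $n$ is $B(z)=\alpha\prod_{k=1}^n \frac{z-a_k}{1-\overline{a_k}z}$ with $a_k\in\mathbb D=\{|z|<1\}$, $\alpha\in\mathbb T=\{|z|=1\}$. *)

(* Defs.v *)
(* complex numbers C := R[i] = complex R for R : realType
   (mathcomp-real-closed), derivative = MathComp-Analysis derive1 over the
   numFieldType C, i.e. the complex derivative lim_{h->0} (f(z+h)-f(z))/h. *)
From HB Require Import structures.
From mathcomp Require Import all_boot all_order all_algebra.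
From mathcomp Require Import all_classical all_reals all_analysis.
From mathcomp Require Export complex.
Set Implicit Arguments. Unset Strict Implicit. Unset Printing Implicit Defensive.
Import Order.TTheory GRing.Theory Num.Theory.
Import numFieldNormedType.Exports.
Local Open Scope ring_scope.
Local Open Scope complex_scope.

Definition blaschke (R : realType) (n : nat) (alpha : R[i]) (a : 'I_n -> R[i])
  (z : R[i]) : R[i] :=
  alpha * \prod_(k < n) ((z - a k) / (1 - (a k)^* * z)).

(* Main.v *)
Require Import Defs.
From HB Require Import structures.
From mathcomp Require Import all_boot all_order all_algebra.
From mathcomp Require Import all_classical all_reals all_analysis.
From mathcomp Require Import complex.
From mathcomp Require Import ring lra zify.
Import Order.TTheory GRing.Theory Num.Theory.
Import numFieldNormedType.Exports.
Local Open Scope ring_scope.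
Local Open Scope complex_scope.

Section Helpers.
Variable R : realType.
Local Notation C := R[i].

Lemma is_deriveV' (f : C^o -> C^o) (x : C^o) (df : C) :
  f x != 0 -> is_derive x 1 f df ->
  is_derive x 1 (fun y => (f y)^-1) (- (f x)^-2 *: df).
Proof.
move=> fx0 [d dv]; apply: DeriveDef; first exact: derivableV.
by rewrite deriveV // dv.
Qed.

Lemma derivable_prod (I : Type) (r : seq I) (P : pred I) (F : I -> C^o -> C^o)
  (x : C^o) : (forall i, derivable (F i) x 1) ->
  derivable (fun z => \prod_(i <- r | P i) F i z) x 1.
Proof.
move=> dF; elim: r => [|a r IH].
  have -> : (fun z => \prod_(i <- [::] | P i) F i z) = cst 1.
    by apply/funext => z; rewrite big_nil.
  exact: derivable_cst.
case Pa: (P a).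
  have -> : (fun z => \prod_(i <- a :: r | P i) F i z) =
     F a * (fun z => \prod_(i <- r | P i) F i z).
    by apply/funext => z; rewrite big_cons Pa.
  apply: (@derivableM C C^o (F a) (fun z => \prod_(i <- r | P i) F i z)).
    exact: dF.
  exact: IH.
have -> : (fun z => \prod_(i <- a :: r | P i) F i z) =
   (fun z => \prod_(i <- r | P i) F i z).
  by apply/funext => z; rewrite big_cons Pa.
exact: IH.
Qed.

Lemma is_derive_prod_log (I : Type) (r : seq I) (P : pred I)
  (F : I -> C^o -> C^o) (dF : I -> C^o) (x : C^o) :
  (forall i, is_derive x 1 (F i) (dF i)) -> (forall i, F i x != 0) ->
  is_derive x 1 (fun z => \prod_(i <- r | P i) F i z)
    ((\prod_(i <- r | P i) F i x) * \sum_(i <- r | P i) dF i / F i x).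
Proof.
move=> dF0 F0; elim: r => [|a r IH].
  have -> : (fun z => \prod_(i <- [::] | P i) F i z) = cst 1.
    by apply/funext => z; rewrite big_nil.
  rewrite !big_nil mul1r; exact: is_derive_cst.
case Pa: (P a).
  have -> : (fun z => \prod_(i <- a :: r | P i) F i z) =
     (fun z => F a z * \prod_(i <- r | P i) F i z).
    by apply/funext => z; rewrite big_cons Pa.
  have H := @is_deriveM C C^o (F a) (fun z => \prod_(i <- r | P i) F i z) x 1 _ _ (dF0 a) IH.
  apply: (is_derive_eq H).
  rewrite !big_cons Pa /=.
  have := F0 a; move: (F a x) (dF a) => u du u0.
  move: (\prod_(i <- r | P i) F i x) (\sum_(i <- r | P i) dF i / F i x) => p s.
  rewrite -[_ *: (p * s)]/(_ * _) -[p *: du]/(p * du).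
  move: u du p s u0; rewrite /= => u du p s u0.
  by field.
have -> : (fun z => \prod_(i <- a :: r | P i) F i z) =
   (fun z => \prod_(i <- r | P i) F i z).
  by apply/funext => z; rewrite big_cons Pa.
by rewrite !big_cons Pa.
Qed.

Lemma is_derive_g (a w : C^o) : 1 - a^* * w != 0 ->
  is_derive w 1 (fun z : C^o => ((z - a) / (1 - a^* * z) : C^o))
    ((1 - a^* * a) / (1 - a^* * w)^+2).
Proof.
move=> nz.
have h1 : is_derive w 1 (fun z : C^o => (z - a : C^o)) 1.
  have h := is_deriveB (is_derive_id w 1) (is_derive_cst a w 1).
  apply: (is_derive_eq h).
  by rewrite subr0.
have h2 : is_derive w 1 (fun z : C^o => (1 - a^* * z : C^o)) (- a^*).
  have h := is_deriveB (is_derive_cst (1:C^o) w 1) (is_deriveZ (a^*) (is_derive_id w 1)).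
  apply: (is_derive_eq h).
  by rewrite sub0r -[_ *: 1]/(_ * 1) mulr1.
have h3 := @is_deriveV' (fun z : C^o => (1 - a^* * z : C^o)) w _ nz h2.
have h4 := @is_deriveM C C^o _ _ w 1 _ _ h1 h3.
apply: (is_derive_eq h4).
have Ex : forall u v : C^o, u *: v = u * v by [].
rewrite !Ex.
move: nz; move: (a^*) => b nz.
by field.
Qed.

Lemma size_prod_le2 (m : nat) (P : pred 'I_m) (F : 'I_m -> {poly C}) :
  (forall k, F k != 0) -> (forall k, (size (F k) <= 2)%N) ->
  (size (\prod_(k < m | P k) F k)%R <= m.+1)%N.
Proof.
move=> F0 F2; rewrite size_prod; last by move=> k _; exact: F0.
have hs : (\sum_(k | P k) size (F k) <= \sum_(k | P k) 2)%N.
  by apply: leq_sum => k _; exact: F2.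
rewrite sum_nat_const in hs.
have hc : (#|P| <= m)%N by rewrite -[m in (_ <= m)%N]card_ord max_card.
move: hs; set S := (\sum_(i | P i) size (F i))%N; move=> hs.
rewrite leq_subLR addnS ltnS; apply: (leq_trans hs); rewrite muln2 -addnn leq_add2l; exact: hc.
Qed.

Lemma prodr_ge1' (I : Type) (r : seq I) (P : pred I) (F : I -> C) :
  (forall i, P i -> 1 <= F i) -> 1 <= \prod_(i <- r | P i) F i.
Proof.
move=> hF; apply: (big_ind (fun x : C => 1 <= x)) => //.
move=> x y hx hy; apply: (le_trans hx).
by apply: ler_peMr => //; apply: le_trans hx.
Qed.

Lemma fnorm (a w : C) :
  `|w - a| ^+ 2 - `|1 - a^* * w| ^+ 2 = (`|w| ^+ 2 - 1) * (1 - `|a| ^+ 2).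
Proof.
rewrite !sqr_normc !rmorphB !rmorphM rmorph1 /= conjcK.
by ring.
Qed.

Lemma gnorm_le1 (a w : C) : `|a| < 1 -> 1 - a^* * w != 0 -> `|w| < 1 ->
  `|(w - a) / (1 - a^* * w)| <= 1.
Proof.
move=> ha nz hw.
rewrite normrM normrV ?unitfE // ler_pdivrMr ?normr_gt0 // mul1r.
rewrite -(@ler_pXn2r _ 2) ?nnegrE ?normr_ge0 //.
rewrite -subr_le0 fnorm; apply: mulr_le0_ge0.
  by rewrite subr_le0 ltW // expr_lt1.
by rewrite subr_ge0 ltW // expr_lt1.
Qed.

Lemma gnorm_ge1 (a w : C) : `|a| < 1 -> 1 - a^* * w != 0 -> 1 < `|w| ->
  1 <= `|(w - a) / (1 - a^* * w)|.
Proof.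
move=> ha nz hw.
rewrite normrM normrV ?unitfE // ler_pdivlMr ?normr_gt0 // mul1r.
rewrite -(@ler_pXn2r _ 2) ?nnegrE ?normr_ge0 //.
rewrite -subr_ge0 fnorm; apply: mulr_ge0.
  by rewrite subr_ge0 ltW // expr_gt1.
by rewrite subr_ge0 ltW // expr_lt1.
Qed.

Lemma is_derive_subc (c w : C^o) : is_derive w 1 (fun z : C^o => (z - c : C^o)) 1.
Proof.
have h := is_deriveB (is_derive_id w 1) (is_derive_cst c w 1).
apply: (is_derive_eq h); by rewrite subr0.
Qed.

Lemma is_derive_lin (b w : C^o) : is_derive w 1 (fun z : C^o => (1 - b * z : C^o)) (- b).
Proof.
have h := is_deriveB (is_derive_cst (1:C^o) w 1) (is_deriveZ b (is_derive_id w 1)).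
apply: (is_derive_eq h).
by rewrite sub0r -[_ *: 1]/(_ * 1) mulr1.
Qed.

Lemma sqn (x : C) : `|x| ^+ 2 = x * x^*.
Proof. exact: sqr_normc. Qed.
Lemma conjB (x y : C) : (x - y)^* = x^* - y^*.
Proof. exact: rmorphB. Qed.
Lemma conjEq0 (x : C) : (x^* == 0) = (x == 0).
Proof. exact: conjc_eq0. Qed.

Lemma tk_alg (w b c : C) : w != 0 -> w - b != 0 -> 1 - c * w != 0 -> w^-1 - c != 0 ->
  ((1 - b * c) / ((w - b) * (w^-1 - c)) =
    w * ((1 - c * b) / (1 - c * w) ^+ 2 / ((w - b) / (1 - c * w))))
  /\ ((1 - b * c) / ((w - b) * (w^-1 - c)) =
    w * (1 / (w - b)) - w * (- c / (1 - c * w))).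
Proof. by move=> h0 h1 h2 h3; split; field; rewrite h0 h1 h2. Qed.

Lemma tk_lem (w b : C) : `|w| = 1 -> w - b != 0 -> 1 - b^* * w != 0 ->
  ((1 - `|b| ^+ 2) / `|w - b| ^+ 2 =
    w * ((1 - b^* * b) / (1 - b^* * w) ^+ 2 / ((w - b) / (1 - b^* * w))))
  /\ ((1 - `|b| ^+ 2) / `|w - b| ^+ 2 =
    w * (1 / (w - b)) - w * (- b^* / (1 - b^* * w))).
Proof.
move=> hw h1 h2.
have w0 : w != 0 by rewrite -normr_eq0 hw oner_eq0.
have wc : w^* = w^-1.
  by apply: (mulfI w0); rewrite mulfV // -sqn hw expr1n.
have h3 : w^-1 - b^* != 0.
  by rewrite -wc -conjB conjEq0.
have [e1 e2] := @tk_alg w b (b^*) w0 h1 h2 h3.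
rewrite !sqr_normc !rmorphB /= wc.
by split; [exact: e1 | exact: e2].
Qed.


Lemma size_prod_le2c (m : nat) (P : pred 'I_m) (F : 'I_m -> {poly C}) :
  (forall k, F k != 0) -> (forall k, (size (F k) <= 2)%N) ->
  (size (\prod_(k < m | P k) F k)%R <= #|P|.+1)%N.
Proof.
move=> F0 F2; rewrite size_prod; last by move=> k _; exact: F0.
have hs : (\sum_(k | P k) size (F k) <= \sum_(k | P k) 2)%N.
  by apply: leq_sum => k _; exact: F2.
rewrite sum_nat_const in hs.
move: hs; set S := (\sum_(i | P i) size (F i))%N; move=> hs.
rewrite leq_subLR addnS ltnS; apply: (leq_trans hs); by rewrite muln2 -addnn.
Qed.

Lemma card_neq (m : nat) (j : 'I_m) : #|(fun i : 'I_m => i != j)| = m.-1.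
Proof. have := cardC1 j; rewrite card_ord; exact. Qed.
End Helpers.

Theorem mainTheorem6 (R : realType) (n : nat) (alpha : R[i]) (a : 'I_n -> R[i])
  (lambda : R[i]) :
  (0 < n)%N ->
  `|alpha| = 1 ->
  (forall k, `|a k| < 1) ->
  `|lambda| = 1 ->
  exists z : 'I_n.+1 -> R[i],
    [/\ injective z,
        (forall w : R[i], w * blaschke alpha a w = lambda <-> exists j, w = z j),
        (forall j, `|z j| = 1) &
        \sum_(j < n.+1) (`|@derive1 R[i] R[i]^o (blaschke alpha a) (z j)| + 1)^-1 = 1].
Proof.
move=> n0 ha hak hl.
pose Q := fun w : R[i] => \prod_(k < n) (1 - (a k)^* * w).
pose A := fun w : R[i] => \prod_(k < n) (w - a k).
have al0 : alpha != 0 by rewrite -normr_eq0 ha oner_eq0.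
have l0 : lambda != 0 by rewrite -normr_eq0 hl oner_eq0.
have BE : forall w, blaschke alpha a w = alpha * A w / Q w.
  by move=> w; rewrite /blaschke prodf_div mulrA.
have Qz : forall w, Q w = 0 -> 1 < `|w|.
  move=> w /eqP /prodf_eq0 [k _]; rewrite subr_eq0 => /eqP h.
  have h2 : `|a k| * `|w| = 1 by rewrite -normcJ -normrM -h normr1.
  have w0 : 0 < `|w|.
    rewrite normr_gt0; apply/eqP => w0; move: h; rewrite w0 mulr0 => /eqP.
    by rewrite oner_eq0.
  by rewrite -h2 -[X in _ < X]mul1r ltr_pM2r.
have Anz : forall w, 1 <= `|w| -> forall k, w - a k != 0.
  move=> w hw k; apply/eqP => /eqP; rewrite subr_eq0 => /eqP e.
  by have := lt_le_trans (hak k) hw; rewrite -e ltxx.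
pose Pp : {poly R[i]} := alpha *: ('X * \prod_(k < n) ('X - (a k)%:P))
   - lambda *: \prod_(k < n) (1 - ((a k)^*)%:P * 'X).
have PpE : forall w, Pp.[w] = alpha * (w * A w) - lambda * Q w.
  move=> w; rewrite /Pp hornerD hornerN !hornerZ hornerM hornerX !horner_prod.
  congr (_ * (_ * _) - _ * _); apply: eq_bigr => k _; by rewrite !hornerE.

have Fnz : forall c : R[i], (1 - c%:P * 'X : {poly R[i]}) != 0.
  move=> c; apply/eqP => h; have := congr1 (horner^~ 0) h.
  by rewrite !hornerE subr0 => /eqP; rewrite oner_eq0.
have Fs2 : forall c : R[i], (size (1 - c%:P * 'X : {poly R[i]})%R <= 2)%N.
  move=> c; apply: (leq_trans (size_add _ _)); rewrite size_opp geq_max size_polyC oner_neq0 /=.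
  by apply: (leq_trans (size_mul_leq _ _)); rewrite size_polyC size_polyX; case: (c != 0).
have s1 : size ('X * \prod_(k < n) ('X - (a k)%:P) : {poly R[i]}) = n.+2.
  rewrite mulrC size_mulX ?size_prod_XsubC; last exact: monic_neq0 (monic_prod_XsubC _ _ _).
  by rewrite /index_enum unlock -enumT -cardT card_ord.
have s2 : (size (lambda *: \prod_(k < n) (1 - ((a k)^*)%:P * 'X) : {poly R[i]})%R <= n.+1)%N.
  apply: (leq_trans (size_scale_leq _ _)).
  by apply: size_prod_le2 => k; [exact: Fnz | exact: Fs2].
have sizeP : size Pp = n.+2.
  by rewrite /Pp size_addl size_scale // s1 // size_opp ltnS.
have leadP : lead_coef Pp = alpha.
  rewrite /Pp lead_coefDl; last by rewrite size_opp (size_scale _ al0) s1 ltnS.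
  rewrite lead_coefZ [X in lead_coef X]mulrC lead_coefMX.
  by have /monicP -> := monic_prod_XsubC (index_enum 'I_n) xpredT a; rewrite mulr1.
have [rs Prs] := closed_field_poly_normal Pp.
rewrite leadP in Prs.
have hsz : size rs = n.+1.
  have := sizeP; rewrite [in X in X = _]Prs size_scale // size_prod_XsubC.
  by case.
pose z := fun j : 'I_n.+1 => nth 0 rs j.
have Pz : forall w, Pp.[w] = alpha * \prod_(j < n.+1) (w - z j).
  move=> w; rewrite [in LHS]Prs hornerZ horner_prod (big_nth 0) hsz big_mkord.
  by congr (_ * _); apply: eq_bigr => j _; rewrite hornerXsubC.

have Qnz_root : forall w, Pp.[w] = 0 -> Q w != 0.
  move=> w h; apply/eqP => hq; have hw := Qz w hq.
  move: h; rewrite PpE hq mulr0 subr0 => /eqP; rewrite !mulf_eq0 (negbTE al0) /=.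
  have w0 : w != 0 by rewrite -normr_gt0 (lt_trans ltr01 hw).
  rewrite (negbTE w0) /=.
  by apply/negP/prodf_neq0 => k _; apply: Anz; exact: ltW.
have rootsP : forall w, w * blaschke alpha a w = lambda <-> Pp.[w] = 0.
  move=> w; split => h.
    have hq : Q w != 0.
      apply/eqP => hq; move: h; rewrite BE hq invr0 !mulr0 => h.
      by move: l0; rewrite -h eqxx.
    rewrite PpE -h BE; field.
    done.
  have hq := Qnz_root w h.
  move: h; rewrite PpE => /eqP; rewrite subr_eq0 => /eqP h.
  apply: (mulIf hq); rewrite -h BE; field.
  done.
have circ : forall w, Pp.[w] = 0 -> `|w| = 1.
  move=> w h; have hq := Qnz_root w h; have hB := (rootsP w).2 h.
  have hn : `|w| * \prod_(k < n) `|(w - a k) / (1 - (a k)^* * w)| = 1.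
    have := congr1 Num.norm hB; rewrite hl /blaschke normrM [`|alpha * _|]normrM ha mul1r normr_prod; exact.
  have nzk : forall k, 1 - (a k)^* * w != 0.
    by move=> k; move/prodf_neq0: hq; apply.
  have rw : `|w| \is Num.real := normr_real w.
  case: (real_ltgtP rw (real1 _)) => // hc.
    have hp : \prod_(k < n) `|(w - a k) / (1 - (a k)^* * w)| <= 1.
      apply: prodr_ile1 => k _; rewrite normr_ge0 /=.
      exact: gnorm_le1.
    have := ler_piMr (normr_ge0 w) hp; rewrite hn => h1.
    by have := le_lt_trans h1 hc; rewrite ltxx.
  have hp : 1 <= \prod_(k < n) `|(w - a k) / (1 - (a k)^* * w)|.
    apply: prodr_ge1' => k _; exact: gnorm_ge1.
  have := ler_peMr (normr_ge0 w) hp; rewrite hn => h1.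
  by have := lt_le_trans hc h1; rewrite ltxx.

pose t := fun (w : R[i]) (k : 'I_n) => (1 - `|a k| ^+ 2) / `|w - a k| ^+ 2.
pose T := fun w : R[i] => \sum_(k < n) t w k.
have key : forall w, Pp.[w] = 0 ->
  `|@derive1 R[i] R[i]^o (blaschke alpha a) w| = T w.
  move=> w h; have hw1 := circ w h; have hq := Qnz_root w h.
  have nzk : forall k, 1 - (a k)^* * w != 0.
    by move=> k; move/prodf_neq0: hq; apply.
  have wak : forall k, w - a k != 0 by apply: Anz; rewrite hw1.
  have w0 : w != 0 by rewrite -normr_eq0 hw1 oner_eq0.
  have wc : w^* = w^-1.
    apply: (mulfI w0); rewrite mulfV // -sqn hw1 expr1n //.
  have wak' : forall k, w^-1 - (a k)^* != 0.
    by move=> k; rewrite -wc -conjB conjEq0.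
  have G0 : forall k, (w - a k) / (1 - (a k)^* * w) != 0.
    by move=> k; rewrite mulf_neq0 ?invr_eq0.
  have hp := @is_derive_prod_log R _ (index_enum 'I_n) (fun _ => true)
    (fun k (z : R[i]^o) => ((z - a k) / (1 - (a k)^* * z) : R[i]^o))
    (fun k => (1 - (a k)^* * a k) / (1 - (a k)^* * w) ^+ 2) w
    (fun k => @is_derive_g R _ _ (nzk k)) G0.
  have hZ := is_deriveZ alpha hp.
  have bf : (blaschke alpha a : R[i]^o -> R[i]^o) = alpha \*: (fun z : R[i]^o =>
     \prod_(k <- index_enum 'I_n | true) ((z - a k) / (1 - (a k)^* * z) : R[i]^o)).
    by apply/funext.
  have hd : @derive1 R[i] R[i]^o (blaschke alpha a) w =
    alpha * (\prod_(k < n) ((w - a k) / (1 - (a k)^* * w)) *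
       \sum_(k < n) (1 - (a k)^* * a k) / (1 - (a k)^* * w) ^+ 2 /
          ((w - a k) / (1 - (a k)^* * w))).
    rewrite derive1E bf.
    by move: (@derive_val _ _ _ _ _ _ _ hZ) => ->.
  have hT : T w = w * \sum_(k < n) (1 - (a k)^* * a k) / (1 - (a k)^* * w) ^+ 2 /
          ((w - a k) / (1 - (a k)^* * w)).
    rewrite /T mulr_sumr; apply: eq_bigr => k _.
    exact: (@tk_lem R w (a k) hw1 (wak k) (nzk k)).1.
  have T0 : 0 <= T w.
    apply: sumr_ge0 => k _; apply: divr_ge0; last exact: exprn_ge0.
    by rewrite subr_ge0 ltW // expr_lt1.
  have hB1 : `|blaschke alpha a w| = 1.
    have := congr1 Num.norm ((rootsP w).2 h).
    by rewrite normrM hw1 mul1r hl.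
  have e : @derive1 R[i] R[i]^o (blaschke alpha a) w = blaschke alpha a w * T w / w.
    rewrite hd hT /blaschke; field.
    done.
  rewrite e; move: hB1; move: (blaschke alpha a w) => Bw hB1.
  by rewrite !normrM normfV hB1 hw1 invr1 mul1r mulr1 ger0_norm.
have Pzj : forall j, Pp.[z j] = 0.
  by move=> j; rewrite Pz (bigD1 j) //= subrr mul0r mulr0.
have Ex : forall u v : R[i]^o, u *: v = u * v by [].
have key2 : forall j, alpha * \prod_(i < n.+1 | i != j) (z j - z i) =
    alpha * A (z j) * (1 + T (z j)).
  move=> j; have h := Pzj j; set w := z j.
  have hw1 := circ w h; have hq := Qnz_root w h.
  have nzk : forall k, 1 - (a k)^* * w != 0.
    by move=> k; move/prodf_neq0: hq; apply.
  have wak : forall k, w - a k != 0 by apply: Anz; rewrite hw1.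
  have w0 : w != 0 by rewrite -normr_eq0 hw1 oner_eq0.
  have hA := @is_derive_prod_log R _ (index_enum 'I_n) (fun _ => true)
    (fun k (z0 : R[i]^o) => (z0 - a k : R[i]^o)) (fun _ => 1) w
    (fun k => @is_derive_subc R (a k) w) wak.
  have hQ := @is_derive_prod_log R _ (index_enum 'I_n) (fun _ => true)
    (fun k (z0 : R[i]^o) => (1 - (a k)^* * z0 : R[i]^o)) (fun k => - (a k)^*) w
    (fun k => @is_derive_lin R ((a k)^*) w) nzk.
  have hzA := @is_deriveM R[i] R[i]^o id _ (w : R[i]^o) 1 _ _ (is_derive_id (w : R[i]^o) 1) hA.
  have hE := is_deriveB (is_deriveZ alpha hzA) (is_deriveZ lambda hQ).
  have pf : (fun z0 : R[i]^o => (Pp.[z0] : R[i]^o)) =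
     (alpha \*: (id * (fun z0 : R[i]^o => \prod_(k <- index_enum 'I_n | true) (z0 - a k : R[i]^o))))
     - lambda \*: (fun z0 : R[i]^o => \prod_(k <- index_enum 'I_n | true) (1 - (a k)^* * z0 : R[i]^o)).
    by apply/funext => z0; rewrite PpE.
  have d1 : 'D_1 (fun z0 : R[i]^o => (Pp.[z0] : R[i]^o)) w =
     alpha * (w * (A w * \sum_(k < n) 1 / (w - a k)) + A w * 1)
     - lambda * (Q w * \sum_(k < n) - (a k)^* / (1 - (a k)^* * w)).
    by rewrite pf; move: (@derive_val _ _ _ _ _ _ _ hE) => ->.
  have Hd := @derivable_prod R _ (index_enum 'I_n.+1) (fun i => i != j)
    (fun i (z0 : R[i]^o) => (z0 - z i : R[i]^o)) w
    (fun i => @ex_derive _ _ _ _ _ _ _ (@is_derive_subc R (z i) w)).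
  have hH := derivableP Hd.
  have hM := @is_deriveM R[i] R[i]^o _ _ (w : R[i]^o) 1 _ _ (@is_derive_subc R w w) hH.
  have hE2 := is_deriveZ alpha hM.
  have pf2 : (fun z0 : R[i]^o => (Pp.[z0] : R[i]^o)) =
     alpha \*: ((fun z0 : R[i]^o => (z0 - w : R[i]^o)) *
       (fun z0 : R[i]^o => \prod_(i <- index_enum 'I_n.+1 | i != j) (z0 - z i : R[i]^o))).
    by apply/funext => z0; rewrite Pz (bigD1 j).
  have d2 : 'D_1 (fun z0 : R[i]^o => (Pp.[z0] : R[i]^o)) w =
     alpha * \prod_(i < n.+1 | i != j) (w - z i).
    rewrite pf2; move: (@derive_val _ _ _ _ _ _ _ hE2) => ->.
    by rewrite !Ex subrr mul0r add0r mulr1.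
  have hT2 : T w = w * \sum_(k < n) 1 / (w - a k)
      - w * \sum_(k < n) - (a k)^* / (1 - (a k)^* * w).
    rewrite /T (eq_bigr _ (fun k _ => (@tk_lem R w (a k) hw1 (wak k) (nzk k)).2)).
    by rewrite sumrB -!mulr_sumr.
  have hPw : alpha * (w * A w) = lambda * Q w.
    by apply/eqP; rewrite -subr_eq0 -PpE h.
  rewrite -d2 d1 hT2 (mulrA lambda) -hPw.
  ring.
have T0 : forall w, 0 <= T w.
  move=> w; apply: sumr_ge0 => k _; apply: divr_ge0; last exact: exprn_ge0.
  by rewrite subr_ge0 ltW // expr_lt1.
have T1 : forall w, 1 + T w != 0.
  move=> w; rewrite gt_eqF //; apply: (lt_le_trans ltr01); by rewrite lerDl.
have zc : forall j, `|z j| = 1 by move=> j; exact: circ _ (Pzj j).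
have z0 : forall j, z j != 0 by move=> j; rewrite -normr_eq0 zc oner_eq0.
have A0 : forall j, A (z j) != 0.
  by move=> j; apply/prodf_neq0 => k _; apply: Anz; rewrite zc.
pose Pi := fun j => \prod_(i < n.+1 | i != j) (z j - z i).
have Pi0 : forall j, Pi j != 0.
  move=> j; apply/eqP => e; have := key2 j; rewrite -/(Pi j) e mulr0 => /eqP.
  by rewrite eq_sym !mulf_eq0 (negbTE al0) (negbTE (A0 j)) (negbTE (T1 _)).
have zinj : injective z.
  move=> i j e; apply/eqP; apply: contraT => ne.
  have := Pi0 j; rewrite /Pi (bigD1 i) /=; last exact: ne.
  by rewrite e subrr mul0r eqxx.
pose Qp : {poly R[i]} := \prod_(k < n) (1 - ((a k)^*)%:P * 'X).
have QpE : forall x, Qp.[x] = Q x.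
  by move=> x; rewrite /Qp horner_prod; apply: eq_bigr => k _; rewrite !hornerE.
pose L : {poly R[i]} := \sum_(j < n.+1)
   (Q (z j) / Pi j) *: \prod_(i < n.+1 | i != j) ('X - (z i)%:P).
have LE : forall x, L.[x] = \sum_(j < n.+1) Q (z j) / Pi j * \prod_(i < n.+1 | i != j) (x - z i).
  move=> x; rewrite /L horner_sum; apply: eq_bigr => j _.
  by rewrite hornerZ horner_prod; congr (_ * _); apply: eq_bigr => i _; rewrite hornerXsubC.
have LQ : L = Qp.
  apply/eqP; rewrite -subr_eq0; apply/negPn/negP => hne.
  have hroot : all (root (L - Qp)) (map z (enum 'I_n.+1)).
    apply/allP => x /mapP [k _ ->]; rewrite /root hornerD hornerN LE QpE.
    rewrite (bigD1 k) //= -/(Pi k) divfK // [X in _ + X - _]big1 ?addr0 ?subrr //.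
    move=> j jk; rewrite (bigD1 k) /=; last by rewrite eq_sym.
    by rewrite subrr mul0r mulr0.
  have huniq : uniq (map z (enum 'I_n.+1)) by rewrite map_inj_uniq ?enum_uniq.
  have := max_poly_roots hne hroot huniq.
  rewrite size_map size_enum_ord.
  have sL : (size L <= n.+1)%N.
    apply: (big_ind (fun p : {poly R[i]} => (size p <= n.+1)%N)) => //.
      by rewrite size_poly0.
      move=> p q hp hq'; apply: (leq_trans (size_add _ _)); by rewrite geq_max hp hq'.
    move=> j _; apply: (leq_trans (size_scale_leq _ _)).
    have := @size_prod_le2c R n.+1 (fun i => i != j) (fun i => 'X - (z i)%:P)
      (fun i => monic_neq0 (monicXsubC _)) (fun i => eq_leq (size_XsubC _)).
    by rewrite card_neq.
  have sQ : (size Qp <= n.+1)%N.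
    by apply: size_prod_le2 => k; [exact: Fnz | exact: Fs2].
  have := size_add L (- Qp); rewrite size_opp => h1 h2.
  by have := leq_trans h2 h1; rewrite leq_max !ltnNge sL sQ.
have Q0 : Q 0 = 1 by rewrite /Q big1 // => k _; rewrite mulr0 subr0.
have P0 : alpha * \prod_(i < n.+1) (0 - z i) = - lambda.
  by rewrite -Pz PpE Q0 mul0r mulr0 mulr1 sub0r.
exists z; split => //.
- move=> w; rewrite rootsP Pz; split.
    move=> /eqP; rewrite mulf_eq0 (negbTE al0) /= => /prodf_eq0 [i _].
    by rewrite subr_eq0 => /eqP ->; exists i.
  by move=> [j ->]; rewrite -Pz; exact: Pzj.
have L0 : L.[0] = 1 by rewrite LQ QpE Q0.
rewrite -[in RHS]L0 LE; apply: eq_bigr => j _.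
rewrite (key _ (Pzj j)) addrC.
have hk2 := key2 j; rewrite -/(Pi j) in hk2.
have hPwj : alpha * (z j * A (z j)) = lambda * Q (z j).
  by apply/eqP; rewrite -subr_eq0 -PpE Pzj.
have h0j : alpha * ((0 - z j) * \prod_(i < n.+1 | i != j) (0 - z i)) = - lambda.
  by rewrite -P0 [in RHS](bigD1 j).
move: hk2 hPwj h0j; rewrite -/(Pi j).
move: (\prod_(i < n.+1 | i != j) (0 - z i)) (T (z j)) (A (z j)) (Q (z j)) (Pi0 j) (A0 j) (T1 (z j)) (z0 j).
move=> P' Tj Aj Qj Pi0j A0j T1j zj0 hk2 hPwj h0j.
have eT : 1 + Tj = Pi j / Aj.
  apply: (mulIf A0j); rewrite divfK // mulrC; apply: (mulfI al0).
  by rewrite mulrA hk2.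
have eQ : Qj = alpha * (z j * Aj) / lambda.
  by apply: (mulfI l0); rewrite hPwj; field.
have eP : P' = lambda / (alpha * z j).
  rewrite -[lambda]opprK -h0j; field.
  by rewrite al0 zj0.
rewrite eT eQ eP; field.
by rewrite Pi0j A0j l0 al0 zj0.
Qed.
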